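(* For Lebesgue almost every $x\in[0,1]$ and for every $i\in\mathbb{N}$, $$\nu_i(x)=\lim_{n\to\infty}\frac{N_i(x,n)}{n}$$ exists and equals $0$.
   Context: Every irrational $x\in(0,1)$ has a unique representation ($\bar O^1$-expansion) $$x=\sum_{k=1}^\infty\frac{(-1)^{k-1}}{g_1(g_1+g_2)\cdots(g_1+g_2+\dots+g_k)},\qquad g_k=g_k(x)\in\mathbb{N}=\{1,2,3,\dots\}.$$ The $g_k(x)$ are the $\bar O^1$-symbols of $x$. For $i,n\in\mathbb{N}$, $N_i(x,n)$ is the number of indices $k\in\{1,\dots,n\}$ with $g_k(x)=i$, and $\nu_i(x)$ (the asymptotic frequency of the symbol $i$) is the limit of $N_i(x,n)/n$ when it exists. *)

(* Defs.v *)
From HB Require Import structures.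
From mathcomp Require Import all_boot all_order all_algebra.
From mathcomp Require Import all_classical all_reals all_analysis.
Set Implicit Arguments. Unset Strict Implicit. Unset Printing Implicit Defensive.
Import Order.TTheory GRing.Theory Num.Theory.
Import numFieldNormedType.Exports.
Local Open Scope ring_scope.
Local Open Scope classical_set_scope.

(* Symbols are indexed from 0: g k here is g_{k+1}(x) of the paper. *)

Definition O1_partial (R : realType) (g : nat -> nat) (n : nat) : R :=
  \sum_(k < n) ((-1) ^+ k / \prod_(j < k.+1) (\sum_(l < j.+1) g l)%:R).

Definition is_O1_expansion (R : realType) (x : R) (g : nat -> nat) : Prop :=
  (forall k, (0 < g k)%N) /\ (O1_partial R g @ \oo --> x).

Definition Ncount (g : nat -> nat) (i n : nat) : nat :=
  \sum_(k < n) (g k == i).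

(* Main.v *)
Require Import Defs.
From HB Require Import structures.
From mathcomp Require Import all_boot all_order all_algebra.
From mathcomp Require Import all_classical all_reals all_analysis.
Import Order.TTheory GRing.Theory Num.Theory.
Import numFieldNormedType.Exports.
Local Open Scope ring_scope.
Local Open Scope classical_set_scope.
From mathcomp Require Import measurable_realfun.
From mathcomp Require Import lra.
From mathcomp Require Import zify.
From mathcomp Require Import ring.
Set Implicit Arguments. Unset Strict Implicit. Unset Printing Implicit Defensive.

Definition Pg (R : realType) (t : nat -> nat) (n : nat) : R :=
  \sum_(k < n) ((-1) ^+ k / \prod_(j < k.+1) (t j)%:R).

Definition incr (t : nat -> nat) := forall k, (t k < t k.+1)%N.

Section PgSec.
Context {R : realType}.

Lemma PgS (t : nat -> nat) n :
  Pg R t n.+1 = (1 - Pg R (fun k => t k.+1) n) / (t 0)%:R.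
Proof.
rewrite /Pg big_ord_recl /= big_ord1 expr0 div1r mulrBl mul1r; congr (_ + _).
rewrite mulr_suml -sumrN; apply: eq_bigr => i _.
rewrite /= big_ord_recl /= exprS invfM.
ring.
Qed.

Lemma Pg_bound (t : nat -> nat) n : incr t -> (0 < t 0)%N ->
  0 <= Pg R t n <= (t 0)%:R^-1.
Proof.
elim: n t => [|n IH] t tI t0.
  by rewrite /Pg big_ord0 lexx invr_ge0 ler0n.
have t1 : (0 < t 1)%N by apply: ltn_trans t0 (tI 0).
have /andP[h1 h2] := IH (fun k => t k.+1) (fun k => tI k.+1) t1.
have hi : ((t 1)%:R^-1 : R) <= 1 by rewrite invf_le1 ?ltr0n // ler1n.
have c0 : (0 : R) < (t 0)%:R by rewrite ltr0n.
rewrite PgS; apply/andP; split.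
  by rewrite divr_ge0 // subr_ge0 (le_trans h2 hi).
rewrite ler_pdivrMr // mulVf ?gt_eqF //; lra.
Qed.

Lemma Pg_lim_bound (t : nat -> nat) (y : R) : incr t -> (0 < t 0)%N ->
  Pg R t @ \oo --> y -> 0 <= y <= (t 0)%:R^-1.
Proof.
move=> tI t0 cv; rewrite -(cvg_lim _ cv) //; apply/andP; split.
  by apply: limr_ge; [apply/cvg_ex; exists y|near=> n; have /andP[] := Pg_bound n tI t0].
by apply: limr_le; [apply/cvg_ex; exists y|near=> n; have /andP[] := Pg_bound n tI t0].
Unshelve. all: by end_near.
Qed.

Lemma Pg_shift (t : nat -> nat) (y : R) : (0 < t 0)%N ->
  Pg R t @ \oo --> y -> Pg R (fun k => t k.+1) @ \oo --> 1 - (t 0)%:R * y.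
Proof.
move=> t0 cv.
have -> : Pg R (fun k => t k.+1) = fun n => 1 - (t 0)%:R * Pg R t n.+1.
  apply/funext => n; rewrite PgS mulrCA divff ?mulr1 ?pnatr_eq0 -?lt0n //.
  ring.
apply: cvgB; first exact: cvg_cst.
apply: cvgM; first exact: cvg_cst.
by rewrite (cvg_shiftS (Pg R t)).
Qed.

End PgSec.
Section MeasSec.
Context {R : realType}.
Local Notation mu := (@lebesgue_measure R).

Lemma affine_meas (u : R) (B : set R) : 0 < u -> measurable B ->
  mu B = (u%:E * mu ((fun x : R => (1 - u * x)%R) @^-1` B))%E.
Proof.
move=> u0 mB.
set f := (fun x : R => 1 - u * x).
have mf : measurable_fun setT f.
  apply: continuous_measurable_fun => x.
  apply: continuousB; [exact: cvg_cst|]. apply: continuousM; [exact: cvg_cst| exact: cvg_id].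
have := @lebesgue_measure_unique R (mscale (NngNum (ltW u0)) (pushforward mu (f : _ -> measurableTypeR R))).
move=> /(_ mf) H; rewrite (H _ B mB) /=; last first.
  move=> _ [[a b] _ <-].
  rewrite /mscale /=; unfold pushforward.
  have -> : f @^-1` `]a, b] = `[(1 - b) / u, (1 - a) / u[%classic.
    apply/seteqP; split => x /=; rewrite !in_itv /= ?ler_pdivrMr ?ltr_pdivlMr // => /andP[h1 h2]; apply/andP; split; rewrite ?ler_pdivrMr ?ltr_pdivlMr //; rewrite /f in h1 h2 *; rewrite ?(mulrC x); lra.
  rewrite !lebesgue_measure_itv /= !lte_fin.
  have -> : ((1 - b) / u < (1 - a) / u) = (a < b).
    by rewrite ltr_pM2r ?invr_gt0 // ltrD2l ltrN2.
  case: ifP => ab; last by rewrite mule0.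
  rewrite -!EFinB -EFinM; congr EFin.
  by rewrite -mulrBl mulrCA divff ?gt_eqF // mulr1; lra.
by [].
Qed.

Definition pre (u : nat) (S : set R) : set R := (fun x : R => (1 - u%:R * x)%R) @^-1` S.

Lemma pre_measurable u S : measurable S -> measurable (pre u S).
Proof.
move=> mS; have mf : measurable_fun setT (fun x : R => (1 - u%:R * x)%R).
  apply: continuous_measurable_fun => x.
  apply: continuousB; [exact: cvg_cst|]. apply: continuousM; [exact: cvg_cst| exact: cvg_id].
by rewrite /pre -[X in measurable X]setTI; exact: mf.
Qed.

Lemma pre_meas u S : (0 < u)%N -> measurable S -> mu (pre u S) = ((u%:R)^-1%:E * mu S)%E.
Proof.
move=> u0 mS; rewrite (@affine_meas u%:R S) ?ltr0n // muleA -EFinM mulVf ?pnatr_eq0 -?lt0n //.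
by rewrite mul1e.
Qed.

Definition prev (s : nat) (t : nat -> nat) (n : nat) := if n is n'.+1 then t n' else s.

Definition Aset (M n s : nat) : set R := [set y | exists t, incr t /\ (s < t 0)%N /\
   (Pg R t @ \oo --> y) /\ t n = (prev s t n + M)%N].

Fixpoint Bset (M n s : nat) : set R :=
  match n with
  | 0 => pre (s + M) `[0, ((s + M).+1%:R)^-1]
  | n'.+1 => \bigcup_k pre (s.+1 + k) (Bset M n' (s.+1 + k))
  end.

Lemma Bset_measurable M n s : measurable (Bset M n s).
Proof.
elim: n s => [|n IH] s /=; first by apply: pre_measurable; exact: measurable_itv.
by apply: bigcup_measurable => k _; exact: pre_measurable.
Qed.

Lemma AsubB M n s : Aset M n s `<=` Bset M n s.
Proof.
elim: n s => [|n IH] s y [t [tI [st [cv ht]]]] /=.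
  have t0 : (0 < t 0)%N by apply: leq_trans st.
  have := Pg_lim_bound (fun k => tI k.+1) (ltn_trans t0 (tI 0)) (Pg_shift t0 cv).
  rewrite /= in ht; rewrite -ht /pre /= in_itv /= => /andP[h1 h2]; apply/andP; split => //.
  have t1 : (0 < t 1)%N := ltn_trans t0 (tI 0).
  apply: le_trans h2 _; rewrite lef_pV2 ?posrE ?ltr0n ?ler_nat //; exact: tI.
have t0 : (0 < t 0)%N by apply: leq_trans st.
exists (t 0 - s.+1)%N => //.
have e : (s.+1 + (t 0 - s.+1))%N = t 0 by rewrite subnKC.
rewrite /pre /= e; apply: IH.
exists (fun k => t k.+1); split; first by move=> k; apply: tI.
split; first exact: tI.
split; first exact: Pg_shift.
by rewrite ht /=; case: n {ht}.
Qed.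

End MeasSec.
Section SumSec.
Context {R : realType}.

Lemma series_le (f : nat -> R) (C : R) : (forall k, 0 <= f k) ->
  (forall N, \sum_(k < N) f k <= C) -> (\sum_(n <oo) (f n)%:E <= C%:E)%E.
Proof.
move=> f0 hC; apply: lime_le; first by apply: is_cvg_nneseries => n _ _; rewrite lee_fin.
by near=> n; rewrite sumEFin lee_fin big_mkord.
Unshelve. all: by end_near.
Qed.

Lemma tele3 (a : nat) N : (0 < a)%N ->
  \sum_(k < N) (((a + k)%:R * (a + k).+1%:R * (a + k).+2%:R)^-1 : R) <=
  ((2 * a * a.+1)%:R)^-1.
Proof.
move=> a0.
suff H : \sum_(k < N) (((a + k)%:R * (a + k).+1%:R * (a + k).+2%:R)^-1 : R) +
  ((2 * (a + N) * (a + N).+1)%:R)^-1 = ((2 * a * a.+1)%:R)^-1.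
  by rewrite -H lerDl invr_ge0 ler0n.
elim: N => [|N IH]; first by rewrite big_ord0 add0r addn0.
rewrite big_ord_recr /= -IH -addrA; congr (_ + _).
rewrite addnS.
have v0 : ((a + N)%:R : R) != 0 by rewrite pnatr_eq0 -lt0n ltn_addr.
move: (a + N) v0 => v v0.
have e1 : (v.+1%:R : R) = v%:R + 1 by rewrite -natr1.
have e2 : (v.+2%:R : R) = v%:R + 2 by rewrite -natr1 e1 -addrA.
rewrite !natrM ?e2 ?e1.
have h1 : (v%:R + 1 : R) != 0 by rewrite -e1 pnatr_eq0.
have h2 : (v%:R + 2 : R) != 0 by rewrite -e2 pnatr_eq0.
field.
have p : (0:R) < a%:R + N%:R by rewrite -natrD ltr0n ltn_addr.
apply/and3P; split; apply: lt0r_neq0; lra.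
Qed.

End SumSec.
Section BoundSec.
Context {R : realType}.
Local Notation mu := (@lebesgue_measure R).

Lemma Bset_bound M n s : (0 < M)%N ->
  (mu (@Bset R M n s) <= (((2 ^ n)%:R)^-1 / ((s.+1)%:R * (s.+2)%:R))%:E)%E.
Proof.
move=> M0; elim: n s => [|n IH] s /=.
  have u0 : (0 < s + M)%N by rewrite addn_gt0 M0 orbT.
  rewrite pre_meas //.
  rewrite lebesgue_measure_itv /= lte_fin invr_gt0 ltr0n /= oppr0 adde0 -EFinM lee_fin expn0 invr1 mul1r.
  rewrite -invfM lef_pV2 ?posrE ?mulr_gt0 ?ltr0n // -!natrM ler_nat leq_mul //.
    lia.
  lia.
set c : R := ((2 ^ n)%:R)^-1.
have mF : forall k, measurable (pre (s.+1 + k) (@Bset R M n (s.+1 + k))).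
  by move=> k; apply: pre_measurable; exact: Bset_measurable.
have mU : measurable (\bigcup_k pre (s.+1 + k) (@Bset R M n (s.+1 + k))).
  by apply: bigcup_measurable => k _; exact: mF.
apply: le_trans (@measure_sigma_subadditive _ _ _ mu _ _ mF mU (@subset_refl _ _)) _.
set f := fun k : nat => ((s.+1 + k)%:R^-1 * (c / ((s.+1 + k).+1%:R * (s.+1 + k).+2%:R)) : R).
apply: (@le_trans _ _ (\sum_(k <oo) (f k)%:E)%E).
  apply: lee_nneseries => [k _ _|k _]; first exact: measure_ge0.
  change (@lebesgue_measure R (pre (s.+1 + k) (@Bset R M n (s.+1 + k))) <= (f k)%:E)%E.
  rewrite pre_meas //; last exact: Bset_measurable.
  rewrite /f EFinM; apply: lee_wpmul2l; first by rewrite lee_fin invr_ge0 ler0n.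
  exact: IH.
apply: series_le.
  by move=> k; rewrite /f mulr_ge0 // ?invr_ge0 ?ler0n // divr_ge0 ?invr_ge0 ?ler0n // mulr_ge0.
move=> N.
have -> : \sum_(k < N) f k =
  c * \sum_(k < N) (((s.+1 + k)%:R * (s.+1 + k).+1%:R * (s.+1 + k).+2%:R)^-1 : R).
  rewrite mulr_sumr; apply: eq_bigr => k _; rewrite /f !invfM; ring.
apply: le_trans (ler_wpM2l _ (tele3 N _)) _.
- by rewrite /c invr_ge0 ler0n.
- by [].
rewrite le_eqVlt; apply/orP; left; apply/eqP.
rewrite /c expnS !natrM !invfM; ring.
Qed.

End BoundSec.
Section NullSec.
Context {R : realType}.
Local Notation mu := (@lebesgue_measure R).

Definition Cset (M N : nat) : set R := \bigcup_k @Bset R M (N + k) 0.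
Definition Nset (M : nat) : set R := \bigcap_N Cset M N.

Lemma geom_sum K : \sum_(k < K) (((2 ^ k.+1)%:R)^-1 : R) = 1 - ((2 ^ K)%:R)^-1.
Proof.
elim: K => [|K IH]; first by rewrite big_ord0 expn0 invr1 subrr.
rewrite big_ord_recr /= IH !expnS !natrM !invfM.
have h : ((2 ^ K)%:R : R) != 0 by rewrite pnatr_eq0 expn_eq0.
field.
exact: h.
Qed.

Lemma Cset_measurable M N : measurable (Cset M N).
Proof. by apply: bigcup_measurable => k _; exact: Bset_measurable. Qed.

Lemma Cset_bound M N : (0 < M)%N -> (mu (Cset M N) <= (((2 ^ N)%:R)^-1)%:E)%E.
Proof.
move=> M0.
have mF : forall k, measurable (@Bset R M (N + k) 0) by move=> k; exact: Bset_measurable.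
apply: le_trans (@measure_sigma_subadditive _ _ _ mu _ _ mF (Cset_measurable M N) (@subset_refl _ _)) _.
set f := fun k : nat => (((2 ^ (N + k))%:R)^-1 / (1%:R * 2%:R) : R).
apply: (@le_trans _ _ (\sum_(k <oo) (f k)%:E)%E).
  apply: lee_nneseries => [k _ _|k _]; first exact: measure_ge0.
  change (@lebesgue_measure R (@Bset R M (N + k) 0) <= (f k)%:E)%E.
  exact: Bset_bound.
apply: series_le.
  by move=> k; rewrite /f divr_ge0 ?invr_ge0 ?ler0n.
move=> K.
have -> : \sum_(k < K) f k = ((2 ^ N)%:R)^-1 * \sum_(k < K) (((2 ^ k.+1)%:R)^-1 : R).
  rewrite mulr_sumr; apply: eq_bigr => k _; rewrite /f expnD expnS !natrM !invfM invr1; ring.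
rewrite geom_sum ler_piMr ?invr_ge0 ?ler0n // lerBlDr lerDl invr_ge0 ler0n //.
Qed.

Lemma Nset_measurable M : measurable (Nset M).
Proof. by apply: bigcapT_measurable => k; exact: Cset_measurable. Qed.

Lemma Nset0 M : (0 < M)%N -> mu (Nset M) = 0%E.
Proof.
move=> M0; apply/le_anti/andP; split; last exact: measure_ge0.
apply/lee_addgt0Pr => e e0; rewrite add0e.
set N := Num.trunc (e^-1).
have := Cset_bound N M0 => h.
have sub : Nset M `<=` Cset M N by move=> x /(_ N I).
have mN : Nset M \in measurable by rewrite inE; exact: Nset_measurable.
have mC : Cset M N \in measurable by rewrite inE; exact: Cset_measurable.
have h1 := @le_measure _ _ _ mu _ _ mN mC sub.
apply: le_trans h1 _.
apply: le_trans h _.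
rewrite lee_fin -[e]invrK lef_pV2 ?posrE ?invr_gt0 ?ltr0n ?expn_gt0 //.
have ei : 0 <= e^-1 by rewrite invr_ge0 ltW.
have /andP[_ h2] := truncn_itv ei.
apply: (le_trans (ltW h2)); rewrite ler_nat; exact: ltn_expl.
Qed.

End NullSec.
Section PierceSec.
Context {R : realType}.

Definition irr (y : R) := forall q : rat, ratr q != y.
Definition dg (y : R) : nat := Num.trunc (y^-1).
Fixpoint ys (x : R) (k : nat) : R :=
  if k is k'.+1 then 1 - (dg (ys x k'))%:R * ys x k' else x.

Lemma dg_props y : 0 < y < 1 -> irr y ->
  [/\ (0 < dg y)%N, (dg y)%:R < y^-1 & y^-1 < (dg y).+1%:R].
Proof.
move=> /andP[y0 y1] iy.
have zi : 0 <= y^-1 by rewrite invr_ge0 ltW.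
have /andP[h1 h2] := truncn_itv zi.
have z1 : 1 < y^-1 by rewrite invf_gt1.
have h3 : (dg y)%:R < y^-1.
  rewrite lt_neqAle h1 andbT; apply/negP => /eqP e.
  have := iy ((dg y)%:R^-1); rewrite fmorphV rmorph_nat /dg e invrK eqxx //.
split => //.
rewrite lt0n; apply/negP => /eqP e; move: h2; rewrite /dg in e; rewrite e => h2.
by move: (lt_trans z1 h2); rewrite ltxx.
Qed.

Lemma next_props y : 0 < y < 1 -> irr y ->
  [/\ 0 < 1 - (dg y)%:R * y < 1, irr (1 - (dg y)%:R * y) &
      (dg y < dg (1 - (dg y)%:R * y))%N].
Proof.
move=> /andP[y0 y1] iy.
have [d0 h1 h2] := dg_props (y:=y) (ltac:(by apply/andP)) iy.
set D := (dg y)%:R : R.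
have D1 : 1 <= D by rewrite /D ler1n.
have yz : y * y^-1 = 1 by rewrite mulfV ?gt_eqF.
have a1 : D * y < 1.
  by have := h1; rewrite -(ltr_pM2l y0) yz mulrC.
have a2 : 1 < y * (D + 1).
  by have := h2; rewrite -(ltr_pM2l y0) yz -natr1.
set y' := 1 - D * y.
have y'0 : 0 < y' by rewrite /y'; lra.
have y'1 : y' < 1 by rewrite /y'; have := mulr_gt0 (lt_le_trans ltr01 D1) y0; lra.
have a3 : y' * (D + 1) < 1.
  have : 0 < D * (y * (D + 1) - 1) by rewrite mulr_gt0 ?subr_gt0 // (lt_le_trans ltr01 D1).
  rewrite /y'; nra.
have a4 : D + 1 < y'^-1 by rewrite -(ltr_pM2l y'0) mulfV ?gt_eqF.
split.
- by apply/andP.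
- have Dn : D != 0 by rewrite gt_eqF // (lt_le_trans ltr01 D1).
  move=> q; apply/eqP => eq'; move: (iy ((1 - q) / (dg y)%:R)).
  have e : ratr ((1 - q) / (dg y)%:R) = (1 - ratr q) / D :> R.
    by rewrite fmorph_div rmorphB rmorph1 rmorph_nat.
  rewrite e eq' /y' => /eqP; apply; field; exact: Dn.
- rewrite ltnNge; apply/negP => hle.
  have y'i : 0 <= y'^-1 by rewrite invr_ge0 ltW.
  have /andP[_ h3] := truncn_itv y'i.
  have : y'^-1 < D + 1.
    apply: (lt_le_trans h3); rewrite /D natr1 ler_nat ltnS; exact: hle.
  by rewrite ltNge (ltW a4).
Qed.

Lemma ys_props x : 0 < x < 1 -> irr x -> forall k, 0 < ys x k < 1 /\ irr (ys x k).
Proof.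
move=> hx ix; elim => [|k [h1 h2]] //=.
by have [] := next_props h1 h2.
Qed.

End PierceSec.
Section ExpSec.
Context {R : realType}.

Lemma prod_ge (t : nat -> nat) n : incr t -> (0 < t 0)%N ->
  (n.+1 <= \prod_(j < n.+1) t j)%N.
Proof.
move=> tI t0.
have tk : forall k, (k < t k)%N.
  elim => [|k IH]; [exact: t0 | exact: leq_ltn_trans IH (tI k)].
have p0 : forall m, (0 < \prod_(j < m) t j)%N.
  move=> m; rewrite prodn_gt0 // => i; exact: leq_ltn_trans (leq0n _) (tk i).
rewrite big_ord_recr /=; apply: leq_trans (tk n) _.
exact: leq_pmull (p0 n).
Qed.

Lemma pierce_id (x : R) n :
  0 < x < 1 -> irr x ->
  x = Pg R (fun k => dg (ys x k)) n +
      (-1) ^+ n * ys x n / \prod_(j < n) (dg (ys x j))%:R.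
Proof.
move=> hx ix; set t := fun k => dg (ys x k).
elim: n => [|n IH]; first by rewrite /Pg !big_ord0 add0r expr0 mul1r divr1.
rewrite {1}IH /Pg big_ord_recr /= -/(Pg R t n) -addrA; congr (_ + _).
rewrite big_ord_recr /=.
have [y0 iy] := ys_props hx ix n.
have [d0 _ _] := dg_props y0 iy.
have tn : (t n)%:R != 0 :> R by rewrite pnatr_eq0 -lt0n.
have P0 : \prod_(j < n) (t j)%:R != 0 :> R.
  rewrite prodf_seq_neq0; apply/allP => j _ /=.
  have [yj ij] := ys_props hx ix j.
  have [dj _ _] := dg_props yj ij.
  by rewrite pnatr_eq0 -lt0n.
rewrite exprS -/(t n).
field.
by rewrite P0 tn.
Qed.

Lemma pierce_cvg (x : R) : 0 < x < 1 -> irr x ->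
  Pg R (fun k => dg (ys x k)) @ \oo --> x.
Proof.
move=> hx ix; set t := fun k => dg (ys x k).
have tI : incr t.
  move=> k; have [h1 h2] := ys_props hx ix k.
  by have [_ _] := next_props h1 h2.
have t0 : (0 < t 0)%N.
  by have [h1 h2] := ys_props hx ix 0; have [] := dg_props h1 h2.
rewrite -(cvg_shiftS (Pg R t)).
apply: (@squeeze_cvgr _ _ _ _ (fun n => x - (n.+1%:R)^-1) (fun n => x + (n.+1%:R)^-1)).
- near=> n => /=.
  have e := pierce_id n.+1 hx ix; rewrite -/t in e.
  have [/andP[y0 y1] _] := ys_props hx ix n.+1.
  have pn : (n.+1%:R : R) <= \prod_(j < n.+1) (t j)%:R.
    by rewrite -natr_prod ler_nat prod_ge.
  have pp : (0 : R) < \prod_(j < n.+1) (t j)%:R by apply: lt_le_trans pn; rewrite ltr0n.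
  have b : ys x n.+1 / \prod_(j < n.+1) (t j)%:R <= (n.+1%:R)^-1.
    apply: (@le_trans _ _ ((\prod_(j < n.+1) (t j)%:R)^-1)).
      by rewrite -[X in _ <= X]mul1r ler_wpM2r ?invr_ge0 ?ltW.
    by rewrite lef_pV2 ?posrE ?ltr0n.
  have b0 : 0 <= ys x n.+1 / \prod_(j < n.+1) (t j)%:R by rewrite divr_ge0 ?ltW.
  move: e b b0; rewrite -!mulrA; set w := ys x n.+1 / _.
  rewrite -signr_odd; case: odd => /=; rewrite ?expr1 ?expr0 => e b b0; clearbody w; rewrite {}e; move: (Pg R t n.+1) ((n.+1%:R : R)^-1) b => P r b; apply/andP; split; lra.
- have hc : (fun n : nat => (n.+1%:R : R)^-1) @ \oo --> (0:R) by exact: cvg_harmonic.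
  rewrite -[X in _ --> X]subr0; apply: cvgB => //; exact: cvg_cst.
- have hc : (fun n : nat => (n.+1%:R : R)^-1) @ \oo --> (0:R) by exact: cvg_harmonic.
  rewrite -[X in _ --> X]addr0; apply: cvgD => //; exact: cvg_cst.
Unshelve. all: by end_near.
Qed.

End ExpSec.
Section FinalSec.
Context {R : realType}.
Local Notation mu := (@lebesgue_measure R).

Lemma exp_of_t (t : nat -> nat) (x : R) : incr t -> (0 < t 0)%N ->
  Pg R t @ \oo --> x -> exists g, is_O1_expansion x g.
Proof.
move=> tI t0 cv.
pose g := fun k => if k is k'.+1 then (t k - t k')%N else t 0.
have ps : forall j, (\sum_(l < j.+1) g l)%N = t j.
  elim => [|j IH]; first by rewrite big_ord1.
  by rewrite big_ord_recr /= IH subnKC // ltnW.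
exists g; split.
  by case => [|k] //=; rewrite subn_gt0.
have -> : O1_partial R g = Pg R t.
  apply/funext => n; rewrite /O1_partial /Pg; apply: eq_bigr => k _.
  congr (_ / _); apply: eq_bigr => j _; by rewrite ps.
exact: cv.
Qed.

Lemma t_of_exp (g : nat -> nat) (x : R) : is_O1_expansion x g ->
  incr (fun j => \sum_(l < j.+1) g l)%N /\ (0 < \sum_(l < 1) g l)%N /\
  Pg R (fun j => \sum_(l < j.+1) g l)%N @ \oo --> x.
Proof.
move=> [gp cv]; split; last split.
- by move=> k /=; rewrite [X in (_ < X)%N]big_ord_recr /= -[X in (X < _)%N]addn0 ltn_add2l.
- by rewrite big_ord1.
- exact: cv.
Qed.

Lemma bad_sub (M : nat) (x : R) g : is_O1_expansion x g ->
  ~ (exists N, forall k, (N <= k)%N -> g k <> M) -> Nset M x.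
Proof.
move=> ex nN N _.
have [k [Nk gk]] : exists k, (N <= k)%N /\ g k = M.
  apply: contrapT => H; apply: nN; exists N => k Nk gk; apply: H; by exists k.
have [tI [t0 cv]] := t_of_exp ex.
exists (k - N)%N => //; rewrite subnKC //.
apply: AsubB; exists (fun j => \sum_(l < j.+1) g l)%N; split => //.
split; first exact: t0.
split => //.
case: k {Nk} gk => [|k] gk /=; first by rewrite big_ord1 gk.
by rewrite big_ord_recr /= gk.
Qed.

Lemma ratio0 (g : nat -> nat) i : (exists N, forall k, (N <= k)%N -> g k <> i) ->
  (fun n : nat => (Ncount g i n)%:R / n%:R : R) @ \oo --> (0 : R).
Proof.
move=> [N hN].
have cnt : forall n, (Ncount g i n <= N)%N.
  move=> n; rewrite /Ncount.
  apply: (@leq_trans (\sum_(k < n) (k < N))%N).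
    apply: leq_sum => k _; case: (ltnP k N) => h; first by case: (g k == i).
    by case: eqP => // /(hN _ h).
  have : forall m, (\sum_(k < m) (k < N) = minn m N)%N.
    elim => [|m IH]; first by rewrite big_ord0 min0n.
    rewrite big_ord_recr /= IH.
    case: (ltnP m N) => h /=; lia.
  by move=> ->; exact: geq_minr.
rewrite -(cvg_shiftS (fun n : nat => (Ncount g i n)%:R / n%:R : R)).
have hc : (fun n : nat => (n.+1%:R : R)^-1) @ \oo --> (0:R) by exact: cvg_harmonic.
apply: (@squeeze_cvgr _ _ _ _ (fun n => 0) (fun n => N%:R * (n.+1%:R)^-1)).
- near=> n => /=; apply/andP; split; first by rewrite divr_ge0 ?ler0n.
  by rewrite ler_wpM2r ?invr_ge0 ?ler0n // ler_nat.
- exact: cvg_cst.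
- rewrite -(mulr0 (N%:R : R)); apply: cvgM => //; exact: cvg_cst.
Unshelve. all: by end_near.
Qed.

End FinalSec.

Lemma ae_comb (R : realType) (P Q S : R -> Prop) : {ae (@lebesgue_measure R), forall x, P x} -> {ae (@lebesgue_measure R), forall x, Q x} -> (forall x, P x -> Q x -> S x) -> {ae (@lebesgue_measure R), forall x, S x}.
Proof.
move=> [A [mA A0 PA]] [B [mB B0 QB]] h.
exists (A `|` B); split.
- exact: measurableU.
- apply/le_anti/andP; split; last exact: measure_ge0.
  have := @measureU2 _ _ _ (@lebesgue_measure R) _ _ mA mB.
  move=> hU; apply: le_trans hU _.
  rewrite -[X in (_ <= X)%E]adde0; apply: leeD.
  + by rewrite le_eqVlt; apply/orP; left; apply/eqP; exact: A0.
  + by rewrite le_eqVlt; apply/orP; left; apply/eqP; exact: B0.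
- move=> x /= nS; apply: contrapT => nAB; apply: nS; apply: h.
  + by apply: contrapT => nP; apply: nAB; left; exact: PA.
  + by apply: contrapT => nP; apply: nAB; right; exact: QB.
Qed.


Unset Implicit Arguments.
Set Strict Implicit.

Theorem lemma1 (R : realType) :
  {ae (@lebesgue_measure R), forall x : R, x \in `[0, 1]%R ->
    (exists g, is_O1_expansion x g) /\
    (forall g, is_O1_expansion x g ->
       forall i : nat, (0 < i)%N ->
         (fun n : nat => (Ncount g i n)%:R / n%:R : R) @ \oo --> (0 : R))}.
Proof.
have Hrat : {ae (@lebesgue_measure R), forall x : R, @irr R x}.
  exists (range ratr); split.
  - apply: countable_measurable; first exact: measurable_set1.
    have -> : range (@ratr R) = \bigcup_(q in [set: rat]) [set (ratr q : R)].
      by apply/seteqP; split => [_ [q _ <-]|_ [q _ /= ->]]; [exists q|exists q].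
    by apply: bigcup_countable => //; exact: countableP.
  - exact: lebesgue_measure_rat.
  - move=> x /= hx; apply: contrapT => nr; apply: hx => q; apply/eqP => e.
    by apply: nr; exists q.
have Hbad : forall i : nat, {ae (@lebesgue_measure R), forall x : R, ~ @Nset R i.+1 x}.
  move=> i; exists (Nset i.+1); split.
  - exact: Nset_measurable.
  - exact: Nset0.
  - by move=> x /= /contrapT.
have Hall := ae_foralln Hbad.
apply: (ae_comb Hrat Hall) => x ix nb hx.
have x0 : x != 0 by apply/eqP => e; move: (ix 0); rewrite rmorph0 e eqxx.
have x1 : x != 1 by apply/eqP => e; move: (ix 1); rewrite rmorph1 e eqxx.
have hx' : 0 < x < 1.
  move: hx; rewrite in_itv /= => /andP[a b]; apply/andP; split; rewrite lt_neqAle ?a ?b andbT //.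
  by rewrite eq_sym.
split.
  have tI : incr (fun k => dg (ys x k)).
    move=> k; have [h1 h2] := ys_props hx' ix k.
    by have [_ _] := next_props h1 h2.
  have t0 : (0 < dg (ys x 0))%N.
    by have [h1 h2] := ys_props hx' ix 0; have [] := dg_props h1 h2.
  exact: (exp_of_t tI t0 (pierce_cvg hx' ix)).
move=> g ex i i0; apply: ratio0.
apply: contrapT => H; apply: (nb i.-1); rewrite prednK //.
exact: (bad_sub ex H).
Qed.
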